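(* Assume inhibitory coupling ($\varepsilon_{ij}\le 0$ for all $i,j$ and $\varepsilon<0$); no assumption is made on the connectivity. Then for every ordering $\mathcal O$ and every $\boldsymbol\delta\in\mathbb R^N$, $$\max_i\big|(A(\mathcal O)\boldsymbol\delta)_i\big|\le\max_i|\delta_i|.$$ Consequently, for any sequence of orderings $\mathcal O_1,\mathcal O_2,\dots$, the iterates $\boldsymbol\delta(l)=A(\mathcal O_l)\boldsymbol\delta(l-1)$ satisfy $\|\boldsymbol\delta(l)\|_\infty\le\|\boldsymbol\delta(0)\|_\infty$ for all $l\in\mathbb N$.
   Context: Let $U$ be a twice continuously differentiable, strictly increasing function on an interval $I\subseteq\mathbb R$ containing $(-\infty,1]$. Assume $U'>0$ and $U''<0$ on $I$, $U(0)=0$ and $U(1)=1$. Fix $N\ge 2$ and a delay $\tau\in(0,1)$. For each $i$ fix a nonempty set $\mathrm{Pre}(i)\subseteq\{1,\dots,N\}\setminus\{i\}$ and put $k_i=|\mathrm{Pre}(i)|$. Fix real couplings $\varepsilon_{ij}$ with $\varepsilon_{ij}\neq0$ if and only if $j\in\mathrm{Pre}(i)$, normalized so that $\sum_j\varepsilon_{ij}=\varepsilon$ for every $i$. An ordering $\mathcal O$ is a choice, for each $i$, of an enumeration $j_1(i),\dots,j_{k_i}(i)$ of $\mathrm{Pre}(i)$. For $n\in\{0,\dots,k_i\}$ define $$p_{i,n}=\frac{U'\Big(U^{-1}\big(U(\tau)+\sum_{m=1}^{n}\varepsilon_{ij_m(i)}\big)\Big)}{U'\big(U^{-1}(U(\tau)+\varepsilon)\big)}.$$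 The stability matrix $A(\mathcal O)$ has entries - $A_{ii}=p_{i,0}$; - $A_{ij}=p_{i,n}-p_{i,n-1}$ if $j=j_n(i)$; - $A_{ij}=0$ if $j\notin\mathrm{Pre}(i)\cup\{i\}$. *)

(* Defs.v *)
From Stdlib Require Import Reals Lra List.
Import ListNotations.
Open Scope R_scope.

(* Neurons are indexed 0..N-1 (the paper uses 1..N). *)

Definition sumR (l : list nat) (f : nat -> R) : R :=
  fold_right (fun j acc => f j + acc) 0 l.

(* max_i |x_i| over i = 0..N-1 (N >= 2 so the max is over a nonempty set;
   the seed 0 is harmless since all entries are >= 0) *)
Definition infnorm (N : nat) (x : nat -> R) : R :=
  fold_right Rmax 0 (map (fun i => Rabs (x i)) (seq 0 N)).

Definition matvec (N : nat) (A : nat -> nat -> R) (x : nat -> R) : nat -> R :=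
  fun i => sumR (seq 0 N) (fun j => A i j * x j).

Definition pfun (U Uinv dU : R -> R) (tau epsT s : R) : R :=
  dU (Uinv (U tau + s)) / dU (Uinv (U tau + epsT)).

Definition p (U Uinv dU : R -> R) (tau epsT : R) (eps : nat -> nat -> R)
  (O : nat -> list nat) (i n : nat) : R :=
  pfun U Uinv dU tau epsT (sumR (firstn n (O i)) (eps i)).

(* index (1-based) of j in the list l, if present: Some n with j = j_n *)
Fixpoint pos1 (j : nat) (l : list nat) : option nat :=
  match l with
  | [] => None
  | k :: l' => if Nat.eqb j k then Some 1%nat
               else match pos1 j l' with Some n => Some (S n) | None => None end
  end.

Definition Amat (U Uinv dU : R -> R) (tau epsT : R) (eps : nat -> nat -> R)
  (O : nat -> list nat) (i j : nat) : R :=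
  if Nat.eqb i j then p U Uinv dU tau epsT eps O i 0
  else match pos1 j (O i) with
       | Some n => p U Uinv dU tau epsT eps O i n - p U Uinv dU tau epsT eps O i (n - 1)
       | None => 0
       end.

Definition is_ordering (N : nat) (Pre : nat -> nat -> Prop) (O : nat -> list nat) : Prop :=
  forall i, (i < N)%nat -> NoDup (O i) /\ (forall j, In j (O i) <-> Pre i j).

Fixpoint iterA (N : nat) (U Uinv dU : R -> R) (tau epsT : R) (eps : nat -> nat -> R)
  (Os : nat -> nat -> list nat) (delta0 : nat -> R) (l : nat) : nat -> R :=
  match l with
  | O => delta0
  | S l' => matvec N (Amat U Uinv dU tau epsT eps (Os (S l')))
                     (iterA N U Uinv dU tau epsT eps Os delta0 l')
  end.

(* Main.v *)
Require Import Defs.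
From Stdlib Require Import Reals Lra Lia List Permutation Ranalysis5.
Import ListNotations.
Open Scope R_scope.

Lemma sumR_app l1 l2 f : sumR (l1 ++ l2) f = sumR l1 f + sumR l2 f.
Proof. induction l1; simpl; [lra|rewrite IHl1; lra]. Qed.

Lemma sumR_perm l1 l2 f : Permutation l1 l2 -> sumR l1 f = sumR l2 f.
Proof. induction 1; simpl; lra. Qed.

Lemma sumR_ext_in l f g : (forall j, In j l -> f j = g j) -> sumR l f = sumR l g.
Proof. induction l; simpl; intros H; [lra|]. rewrite H by auto. rewrite IHl; auto. Qed.

Lemma sumR_zero l f : (forall j, In j l -> f j = 0) -> sumR l f = 0.
Proof. induction l; simpl; intros H; [lra|]. rewrite H by auto. rewrite IHl; auto. lra. Qed.

Lemma sumR_filter l b f : sumR l f = sumR (filter b l) f + sumR (filter (fun x => negb (b x)) l) f.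
Proof. induction l; simpl; [lra|]. destruct (b a); simpl; rewrite IHl; lra. Qed.

Lemma sum_support N L f : NoDup L -> (forall j, In j L -> (j < N)%nat) ->
  (forall j, (j < N)%nat -> ~ In j L -> f j = 0) -> sumR (seq 0 N) f = sumR L f.
Proof.
  intros HL HLN Hf.
  set (b := fun j => if in_dec Nat.eq_dec j L then true else false).
  rewrite (sumR_filter _ b).
  rewrite (sumR_zero (filter (fun x => negb (b x)) _)).
  2:{ intros j Hj. apply filter_In in Hj as [Hj1 Hj2]. apply in_seq in Hj1.
      unfold b in Hj2. destruct (in_dec Nat.eq_dec j L); simpl in Hj2; try discriminate.
      apply Hf; [lia|assumption]. }
  rewrite Rplus_0_r. apply sumR_perm. apply NoDup_Permutation.
  - apply NoDup_filter, seq_NoDup.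
  - exact HL.
  - intros x; rewrite filter_In, in_seq; unfold b; split.
    + intros [_ H]. destruct (in_dec Nat.eq_dec x L); auto; discriminate.
    + intros H. specialize (HLN x H). destruct (in_dec Nat.eq_dec x L); [|contradiction]. split; auto; lia.
Qed.

Lemma pos1_in j l : In j l -> exists n, pos1 j l = Some (S n).
Proof.
  induction l as [|k l IH]; simpl; [tauto|]. intros H.
  destruct (Nat.eqb_spec j k). { exists 0%nat; auto. }
  destruct H as [H|H]; [congruence|]. destruct (IH H) as [m Hm]. rewrite Hm. eauto.
Qed.

Lemma pos1_notin j l : ~ In j l -> pos1 j l = None.
Proof.
  induction l as [|k l IH]; simpl; auto. intros H.
  destruct (Nat.eqb_spec j k). { exfalso; auto. }
  rewrite IH; auto.
Qed.

Lemma infnorm_ge N x i : (i < N)%nat -> Rabs (x i) <= infnorm N x.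
Proof.
  unfold infnorm. intros Hi. assert (Hin : In i (seq 0 N)) by (apply in_seq; lia).
  revert Hin. generalize (seq 0 N). induction l; simpl; [tauto|].
  intros [->|H]. apply Rmax_l. eapply Rle_trans; [apply IHl; auto| apply Rmax_r].
Qed.

Lemma infnorm_nonneg N x : 0 <= infnorm N x.
Proof.
  unfold infnorm. generalize (seq 0 N). induction l; simpl; [lra|].
  eapply Rle_trans; [apply IHl| apply Rmax_r].
Qed.

Lemma infnorm_le N x M : 0 <= M -> (forall i, (i < N)%nat -> Rabs (x i) <= M) -> infnorm N x <= M.
Proof.
  unfold infnorm. intros HM H.
  assert (H' : forall i, In i (seq 0 N) -> Rabs (x i) <= M) by (intros i Hi; apply in_seq in Hi; apply H; lia).
  revert H'. generalize (seq 0 N). induction l; simpl; intros H'; [lra|].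
  apply Rmax_lub; auto.
Qed.

Section Tel.
Variable F : R -> R.
Hypothesis Fmono : forall s1 s2, s1 <= s2 <= 0 -> F s2 <= F s1.
Variable e d : nat -> R.
Variable M : R.

Definition T (l : list nat) (c : R) (j : nat) : R :=
  match pos1 j l with
  | Some n => F (c + sumR (firstn n l) e) - F (c + sumR (firstn (n - 1) l) e)
  | None => 0 end.

Lemma sumR_nonpos l : (forall j, In j l -> e j <= 0) -> sumR l e <= 0.
Proof. induction l; simpl; intros H; [lra|]. pose proof (H a (or_introl eq_refl)). pose proof (IHl (fun j h => H j (or_intror h))). lra. Qed.

Lemma tel l c : NoDup l -> (forall j, In j l -> e j <= 0) -> (forall j, In j l -> Rabs (d j) <= M) ->
  c <= 0 ->
  Rabs (sumR l (fun j => T l c j * d j)) <= (F (c + sumR l e) - F c) * M.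
Proof.
  revert c. induction l as [|k l IH]; intros c Hnd He Hd Hc; simpl.
  - rewrite Rabs_R0, Rplus_0_r. lra.
  - inversion Hnd as [|? ? Hk Hnd']; subst.
    assert (Hek : e k <= 0) by (apply He; left; reflexivity).
    assert (Hs : sumR l e <= 0) by (apply sumR_nonpos; intros; apply He; right; auto).
    assert (Tk : T (k :: l) c k = F (c + e k) - F c).
    { unfold T; simpl. rewrite Nat.eqb_refl. simpl. rewrite !Rplus_0_r. reflexivity. }
    rewrite Tk.
    rewrite (sumR_ext_in l _ (fun j => T l (c + e k) j * d j)).
    2:{ intros j Hj. unfold T; simpl. destruct (Nat.eqb_spec j k); [subst; contradiction|].
        destruct (pos1_in _ _ Hj) as [m Hm]. rewrite Hm. simpl. rewrite Nat.sub_0_r.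
        change (match l with [] => [] | a :: l0 => a :: firstn m l0 end) with (firstn (S m) l). rewrite !Rplus_assoc. reflexivity. }
    pose proof (IH (c + e k) Hnd' (fun j h => He j (or_intror h)) (fun j h => Hd j (or_intror h)) ltac:(lra)) as IH'.
    assert (F1 : F c <= F (c + e k)) by (apply Fmono; lra).
    assert (F2 : F (c + e k) <= F (c + e k + sumR l e)) by (apply Fmono; lra).
    assert (Hdk : Rabs (d k) <= M) by (apply Hd; left; reflexivity).
    eapply Rle_trans; [apply Rabs_triang|]. rewrite Rabs_mult, (Rabs_right (F _ - _)) by lra.
    replace (c + (e k + sumR l e)) with (c + e k + sumR l e) by lra.
    assert (0 <= M) by (eapply Rle_trans; [apply Rabs_pos|exact Hdk]).
    assert ((F (c + e k) - F c) * Rabs (d k) <= (F (c + e k) - F c) * M) by (apply Rmult_le_compat_l; lra).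
    lra.
Qed.
End Tel.

Theorem mainTheorem5
  (* the function U on the interval I *)
  (I : R -> Prop) (U dU ddU Uinv : R -> R)
  (HIint : forall x y z, I x -> I z -> x <= y <= z -> I y)
  (HIcont : forall x, x <= 1 -> I x)
  (HUd : forall x, interior I x -> derivable_pt_lim U x (dU x))
  (HUdd : forall x, interior I x -> derivable_pt_lim dU x (ddU x))
  (HUddc : forall x, interior I x -> continuity_pt ddU x)
  (HUincr : forall x y, I x -> I y -> x < y -> U x < U y)
  (HdUpos : forall x, interior I x -> 0 < dU x)
  (HddUneg : forall x, interior I x -> ddU x < 0)
  (HU0 : U 0 = 0) (HU1 : U 1 = 1)
  (* Uinv is the inverse of U on U(I) *)
  (HUinv : forall y, (exists x, I x /\ U x = y) -> I (Uinv y) /\ U (Uinv y) = y)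
  (* network *)
  (N : nat) (HN : (2 <= N)%nat) (tau : R) (Htau : 0 < tau < 1)
  (Pre : nat -> nat -> Prop)
  (HPre : forall i j, (i < N)%nat -> Pre i j -> (j < N)%nat /\ j <> i)
  (HPrene : forall i, (i < N)%nat -> exists j, Pre i j)
  (eps : nat -> nat -> R) (epsT : R)
  (Heps : forall i j, (i < N)%nat -> (j < N)%nat -> (eps i j <> 0 <-> Pre i j))
  (HepsT : forall i, (i < N)%nat -> sumR (seq 0 N) (eps i) = epsT)
  (* inhibitory coupling *)
  (Hinh : forall i j, (i < N)%nat -> (j < N)%nat -> eps i j <= 0)
  (HepsTneg : epsT < 0) :
  (forall (O : nat -> list nat) (delta : nat -> R),
      is_ordering N Pre O ->
      infnorm N (matvec N (Amat U Uinv dU tau epsT eps O) delta) <= infnorm N delta)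
  /\
  (forall (Os : nat -> nat -> list nat) (delta0 : nat -> R),
      (forall l, (1 <= l)%nat -> is_ordering N Pre (Os l)) ->
      forall l : nat,
        infnorm N (iterA N U Uinv dU tau epsT eps Os delta0 l) <= infnorm N delta0).
Proof.
  assert (Hint : forall x, x < 1 -> interior I x).
  { intros x Hx. unfold interior, neighbourhood.
    exists (mkposreal (1 - x) ltac:(lra)). intros y Hy. unfold disc in Hy; simpl in Hy.
    apply HIcont. apply Rabs_def2 in Hy. lra. }
  assert (HdUdec : forall a b, a < b -> b < 1 -> dU b < dU a).
  { intros a b Hab Hb. destruct (MVT_cor2 dU ddU a b Hab) as [c [Hc1 Hc2]].
    { intros c Hc. apply HUdd, Hint. lra. }
    assert (ddU c < 0) by (apply HddUneg, Hint; lra). nra. }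
  assert (HUlin : forall x, x < 0 -> U x <= dU 0 * x).
  { intros x Hx. destruct (MVT_cor2 U dU x 0 Hx) as [c [Hc1 Hc2]].
    { intros c Hc. apply HUd, Hint. lra. }
    assert (dU 0 < dU c) by (apply HdUdec; lra). nra. }
  assert (HdU0 : 0 < dU 0) by (apply HdUpos, Hint; lra).
  assert (HUcont : forall x, x < 1 -> continuity_pt U x).
  { intros x Hx. apply derivable_continuous_pt. exists (dU x). apply HUd, Hint; exact Hx. }
  assert (Hsurj : forall y, y <= U tau -> exists x, I x /\ U x = y).
  { intros y Hy. destruct (Req_dec y (U tau)) as [->|Hne].
    { exists tau. split; auto. apply HIcont; lra. }
    set (a := Rmin (-1) (y / dU 0 - 1)).
    assert (Ha : a < 0) by (unfold a; pose proof (Rmin_l (-1) (y / dU 0 - 1)); lra).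
    assert (Ha2 : dU 0 * a <= y - dU 0).
    { unfold a. pose proof (Rmin_r (-1) (y / dU 0 - 1)).
      replace (y - dU 0) with (dU 0 * (y / dU 0 - 1)) by (field; lra).
      apply Rmult_le_compat_l; lra. }
    assert (HUa : U a < y) by (pose proof (HUlin a Ha); lra).
    destruct (IVT_interv (fun x => U x - y) a tau) as [z [Hz1 Hz2]].
    { intros x Hx. apply continuity_pt_minus; [apply HUcont; lra| apply continuity_pt_const; intros ? ?; reflexivity]. }
    { lra. } { lra. } { lra. }
    exists z. split; [apply HIcont; lra| lra]. }
  set (V := fun s => Uinv (U tau + s)).
  assert (HV : forall s, s <= 0 -> I (V s) /\ U (V s) = U tau + s /\ V s <= tau).
  { intros s Hs. destruct (HUinv (U tau + s)) as [H1 H2]. { apply Hsurj; lra. }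
    unfold V. split; auto. split; auto.
    destruct (Rle_lt_dec (Uinv (U tau + s)) tau) as [?|Hlt]; auto.
    exfalso. assert (U tau < U (Uinv (U tau + s))) by (apply HUincr; auto; apply HIcont; lra). lra. }
  assert (HVmono : forall s1 s2, s1 <= s2 <= 0 -> V s1 <= V s2).
  { intros s1 s2 Hs. destruct (HV s1 ltac:(lra)) as [A1 [B1 C1]]. destruct (HV s2 ltac:(lra)) as [A2 [B2 C2]].
    destruct (Rle_lt_dec (V s1) (V s2)) as [?|Hlt]; auto. exfalso.
    assert (U (V s2) < U (V s1)) by (apply HUincr; auto). lra. }
  set (g := fun s => dU (V s)).
  assert (Hgpos : forall s, s <= 0 -> 0 < g s).
  { intros s Hs. unfold g. apply HdUpos, Hint. destruct (HV s Hs) as [_ [_ ?]]. lra. }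
  assert (Hgmono : forall s1 s2, s1 <= s2 <= 0 -> g s2 <= g s1).
  { intros s1 s2 Hs. unfold g. pose proof (HVmono s1 s2 Hs) as Hm.
    destruct (HV s2 ltac:(lra)) as [_ [_ ?]].
    destruct Hm as [Hm|Hm]; [left; apply HdUdec; lra| rewrite Hm; lra]. }
  set (F := pfun U Uinv dU tau epsT).
  assert (HFg : forall s, F s = g s / g epsT) by reflexivity.
  assert (Hgeps : 0 < g epsT) by (apply Hgpos; lra).
  assert (HFmono : forall s1 s2, s1 <= s2 <= 0 -> F s2 <= F s1).
  { intros s1 s2 Hs. rewrite !HFg. unfold Rdiv. apply Rmult_le_compat_r.
    left; apply Rinv_0_lt_compat; auto. apply Hgmono; auto. }
  assert (HF1 : F epsT = 1) by (rewrite HFg; field; lra).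
  assert (HF0 : 0 <= F 0) by (rewrite HFg; left; apply Rdiv_lt_0_compat; auto; apply Hgpos; lra).
  assert (Part1 : forall (O : nat -> list nat) (delta : nat -> R),
      is_ordering N Pre O ->
      infnorm N (matvec N (Amat U Uinv dU tau epsT eps O) delta) <= infnorm N delta).
  { intros O delta HO. set (M := infnorm N delta).
    assert (HM0 : 0 <= M) by apply infnorm_nonneg.
    apply infnorm_le; auto. intros i Hi. destruct (HO i Hi) as [Hnd HinO].
    assert (HOlt : forall j, In j (O i) -> (j < N)%nat /\ j <> i).
    { intros j Hj. apply HPre; auto. apply HinO; auto. }
    assert (HiO : ~ In i (O i)) by (intros H; destruct (HOlt i H); auto).
    unfold matvec.
    rewrite (sum_support N (i :: O i)).
    2:{ constructor; auto. }
    2:{ intros j [<-|Hj]; auto. apply HOlt; auto. }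
    2:{ intros j Hj Hn. unfold Amat. destruct (Nat.eqb_spec i j). { subst; exfalso; apply Hn; left; auto. }
        rewrite pos1_notin. lra. intros H; apply Hn; right; auto. }
    simpl. unfold Amat at 1. rewrite Nat.eqb_refl.
    rewrite (sumR_ext_in (O i) _ (fun j => T F (eps i) (O i) 0 j * delta j)).
    2:{ intros j Hj. unfold Amat, T. destruct (Nat.eqb_spec i j). { subst; contradiction. }
        destruct (pos1 j (O i)); [|reflexivity]. unfold p. fold F. rewrite !Rplus_0_l. reflexivity. }
    assert (Hsum : sumR (O i) (eps i) = epsT).
    { rewrite <- (HepsT i Hi). symmetry. apply sum_support; auto.
      - intros j Hj; apply HOlt; auto.
      - intros j Hj Hn. destruct (Req_dec (eps i j) 0) as [?|Hne]; auto.
        exfalso. apply Hn, HinO. apply (Heps i j Hi Hj); auto. }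
    pose proof (tel F HFmono (eps i) delta M (O i) 0 Hnd) as Ht.
    rewrite Rplus_0_l, Hsum, HF1 in Ht.
    assert (Ht' : Rabs (sumR (O i) (fun j => T F (eps i) (O i) 0 j * delta j)) <= (1 - F 0) * M).
    { apply Ht; [| |lra].
      - intros j Hj. apply Hinh; auto. apply HOlt; auto.
      - intros j Hj. apply infnorm_ge. apply HOlt; auto. }
    assert (p U Uinv dU tau epsT eps O i 0 = F 0).
    { unfold p. simpl. reflexivity. }
    rewrite H.
    assert (F 0 <= 1) by (rewrite <- HF1; apply HFmono; lra).
    eapply Rle_trans; [apply Rabs_triang|]. rewrite Rabs_mult, (Rabs_right (F 0)) by lra.
    assert (F 0 * Rabs (delta i) <= F 0 * M) by (apply Rmult_le_compat_l; auto; apply infnorm_ge; auto).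
    lra. }
  split; auto.
  intros Os delta0 HOs l. induction l as [|l IH]; simpl; [lra|].
  eapply Rle_trans; [apply Part1|exact IH]. apply HOs. lia.
Qed.
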